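(* Let $G$ be a 5-vertex-critical $(P_5,\text{chair})$-free graph that is not isomorphic to any graph in $\mathcal{F}=\{K_5,W,P,Q_1,Q_2,Q_3\}$, and let $C=v_1v_2v_3v_4v_5v_1$ be an induced $C_5$ in $G$. Then $|S_4(i)|\le 6$ for all $1\le i\le 5$.
   Context: All graphs are finite and simple; $P_5$ is the path on 5 vertices; the chair is a $P_4$ plus a vertex adjacent to exactly one of the two middle vertices of the $P_4$; ''$H$-free'' means no induced subgraph isomorphic to $H$; $G$ is $k$-vertex-critical if $\chi(G)=k$ and $\chi(G-v)<k$ for all $v$. Indices modulo 5. $S_4(i)=\{v\in V(G)\setminus V(C): N(v)\cap V(C)=\{v_{i-2},v_{i-1},v_{i+1},v_{i+2}\}\}$. The graphs of $\mathcal{F}$ (other than $K_5$) are given by adjacency lists on vertex sets $\{0,\dots,n-1\}$: $W$: 0:1 4 5 6; 1:0 2 5 6; 2:1 3 5 6; 3:2 4 5 6; 4:0 3 5 6; 5:0 1 2 3 4 6; 6:0 1 2 3 4 5. $P$: 0:1 4 5 6; 1:0 2 7 8; 2:1 3 5 6 7 8; 3:2 4 5 6 7 8; 4:0 3 7 8; 5:0 2 3 7; 6:0 2 3 8; 7:1 2 3 4 5 8; 8:1 2 3 4 6 7. $Q_1$: 0:1 4 5 6; 1:0 2 5 6 7 8; 2:1 3 5 6 7 8; 3:2 4 7 8; 4:0 3 7 8; 5:0 1 2 6 7; 6:0 1 2 5 8; 7:1 2 3 4 5; 8:1 2 3 4 6. $Q_2$: 0:1 4 5 6; 1:0 2 5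 6 7 8; 2:1 3 5 6 7 8; 3:2 4 5 6 7 8; 4:0 3 7 8; 5:0 2 3 6 7; 6:0 2 3 5 8; 7:1 2 3 4 5; 8:1 2 3 4 6. $Q_3$: 0:1 4 5 6; 1:0 2 5 7 8; 2:1 3 5 7 8; 3:2 4 6 7 8; 4:0 3 6 7 8; 5:0 1 2 6; 6:0 3 4 5 8; 7:1 2 3 4 8; 8:1 2 3 4 6 7. *)

(* Defs.v *)
From mathcomp Require Import all_boot.
Set Implicit Arguments. Unset Strict Implicit. Unset Printing Implicit Defensive.

(* A finite simple graph is a symmetric irreflexive relation e on a finType T. *)

Definition colorable_on (T : finType) (e : rel T) (A : {set T}) (k : nat) : bool :=
  [exists c : {ffun T -> 'I_k},
     [forall x, forall y, ((x \in A) && (y \in A) && e x y) ==> (c x != c y)]].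

(* chromatic number of G[A]: least k with a proper k-colouring
   (k = #|T| colours always suffice, so the search range is enough) *)
Definition chi_on (T : finType) (e : rel T) (A : {set T}) : nat :=
  find (colorable_on e A) (iota 0 #|T|.+1).

Definition chi (T : finType) (e : rel T) : nat := chi_on e setT.

Definition vertex_critical (k : nat) (T : finType) (e : rel T) : Prop :=
  chi e = k /\ forall v : T, chi_on e (~: [set v]) < k.

Definition induced_copy (n : nat) (eH : rel 'I_n) (T : finType) (e : rel T) : Prop :=
  exists f : 'I_n -> T, injective f /\ forall i j, e (f i) (f j) = eH i j.

Definition H_free (n : nat) (eH : rel 'I_n) (T : finType) (e : rel T) : Prop :=
  ~ induced_copy eH e.

Definition isomorphic (n : nat) (eH : rel 'I_n) (T : finType) (e : rel T) : Prop :=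
  exists f : 'I_n -> T, bijective f /\ forall i j, e (f i) (f j) = eH i j.

Definition adj_rel (n : nat) (l : seq (seq nat)) : rel 'I_n :=
  fun i j => (nat_of_ord j) \in nth [::] l i.
Arguments adj_rel n l : clear implicits.

Definition P5_rel : rel 'I_5 :=
  fun i j => (i.+1 == j :> nat) || (j.+1 == i :> nat).

(* chair: path 0-1-2-3 plus vertex 4 adjacent to 1 *)
Definition chair_rel : rel 'I_5 :=
  adj_rel 5 [:: [:: 1]; [:: 0; 2; 4]; [:: 1; 3]; [:: 2]; [:: 1]].

Definition K5_rel : rel 'I_5 := fun i j => i != j.

Definition W_rel : rel 'I_7 := adj_rel 7
  [:: [:: 1;4;5;6]; [:: 0;2;5;6]; [:: 1;3;5;6]; [:: 2;4;5;6]; [:: 0;3;5;6];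
      [:: 0;1;2;3;4;6]; [:: 0;1;2;3;4;5]].

Definition P_rel : rel 'I_9 := adj_rel 9
  [:: [:: 1;4;5;6]; [:: 0;2;7;8]; [:: 1;3;5;6;7;8]; [:: 2;4;5;6;7;8]; [:: 0;3;7;8];
      [:: 0;2;3;7]; [:: 0;2;3;8]; [:: 1;2;3;4;5;8]; [:: 1;2;3;4;6;7]].

Definition Q1_rel : rel 'I_9 := adj_rel 9
  [:: [:: 1;4;5;6]; [:: 0;2;5;6;7;8]; [:: 1;3;5;6;7;8]; [:: 2;4;7;8]; [:: 0;3;7;8];
      [:: 0;1;2;6;7]; [:: 0;1;2;5;8]; [:: 1;2;3;4;5]; [:: 1;2;3;4;6]].

Definition Q2_rel : rel 'I_9 := adj_rel 9
  [:: [:: 1;4;5;6]; [:: 0;2;5;6;7;8]; [:: 1;3;5;6;7;8]; [:: 2;4;5;6;7;8]; [:: 0;3;7;8];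
      [:: 0;2;3;6;7]; [:: 0;2;3;5;8]; [:: 1;2;3;4;5]; [:: 1;2;3;4;6]].

Definition Q3_rel : rel 'I_9 := adj_rel 9
  [:: [:: 1;4;5;6]; [:: 0;2;5;7;8]; [:: 1;3;5;7;8]; [:: 2;4;6;7;8]; [:: 0;3;6;7;8];
      [:: 0;1;2;6]; [:: 0;3;4;5;8]; [:: 1;2;3;4;8]; [:: 1;2;3;4;6;7]].

Definition in_F (T : finType) (e : rel T) : Prop :=
  isomorphic K5_rel e \/ isomorphic W_rel e \/ isomorphic P_rel e \/
  isomorphic Q1_rel e \/ isomorphic Q2_rel e \/ isomorphic Q3_rel e.

Definition C5_rel : rel 'I_5 :=
  fun i j => (j == (i.+1 %% 5) :> nat) || (i == (j.+1 %% 5) :> nat).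

Definition induced_C5 (T : finType) (e : rel T) (v : 'I_5 -> T) : Prop :=
  injective v /\ forall i j, e (v i) (v j) = C5_rel i j.

(* S_4(i): vertices outside C whose neighbours on C are exactly
   {v_(i-2), v_(i-1), v_(i+1), v_(i+2)} = all cycle vertices except v_i *)
Definition S4 (T : finType) (e : rel T) (v : 'I_5 -> T) (i : 'I_5) : {set T} :=
  [set x | [forall j, v j != x] && [forall j, e x (v j) == (j != i)]].

(* Main.v *)
Require Import Defs.
From mathcomp Require Import all_boot zify.
Set Implicit Arguments. Unset Strict Implicit. Unset Printing Implicit Defensive.

Record Ctx (T : finType) (e : rel T) : Prop := MkCtx {
  c_sym : symmetric e;
  c_irr : irreflexive e;
  c_crit : vertex_critical 5 e;
  c_P5 : H_free P5_rel e;
  c_chair : H_free chair_rel e;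
  c_big : 5 <= #|T| }.

Lemma col_of_chi (T : finType) (e : rel T) (A : {set T}) :
  5 <= #|T| -> chi_on e A < 5 ->
  exists c : T -> nat, (forall x, c x < 4) /\
    forall x y, x \in A -> y \in A -> e x y -> c x != c y.
Proof.
move=> big; rewrite /chi_on => Hf.
set s := iota 0 #|T|.+1 in Hf.
have Hh : has (colorable_on e A) s.
  by rewrite has_find size_iota; apply: (leq_trans Hf); apply: (leq_trans big).
have := nth_find 0 Hh.
rewrite nth_iota; last by rewrite -(size_iota 0 #|T|.+1) -has_find.
rewrite add0n => /existsP [c /forallP Hc].
exists (fun x => nat_of_ord (c x)); split.
  by move=> x; apply: (leq_trans (ltn_ord (c x))); rewrite -ltnS.
move=> x y xA yA exy.
have := forallP (Hc x) y; rewrite xA yA exy /=.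
by [].
Qed.

Lemma chi_le4 (T : finType) (e : rel T) (c : T -> nat) :
  5 <= #|T| -> (forall x, c x < 4) -> (forall x y, e x y -> c x != c y) ->
  chi e <= 4.
Proof.
move=> big Hc Hp.
have Hcol : colorable_on e setT 4.
  apply/existsP; exists [ffun x => (inord (c x) : 'I_4)].
  apply/forallP => x; apply/forallP => y; apply/implyP => /andP [_ exy].
  rewrite !ffunE; apply/eqP => /(congr1 val); rewrite /= !inordK //.
  by apply/eqP; apply: Hp.
rewrite leqNgt /chi /chi_on; apply/negP => H.
have := before_find 0 H; rewrite nth_iota; last by lia.
by rewrite add0n Hcol.
Qed.

Lemma crit_col (T : finType) (e : rel T) (H : Ctx e) (u0 : T) :
  exists c : T -> nat, (forall x, c x < 4) /\
    forall x y, x != u0 -> y != u0 -> e x y -> c x != c y.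
Proof.
have [c [Hc Hp]] := col_of_chi (c_big H) ((c_crit H).2 u0).
exists c; split => // x y hx hy; apply: Hp; by rewrite !inE ?hx ?hy.
Qed.

Lemma no_hom (T : finType) (e : rel T) (H : Ctx e) (g : T -> T) (u0 : T) :
  (forall x y, e x y -> e (g x) (g y)) -> (forall x, g x != u0) -> False.
Proof.
move=> Hg Hu.
have [c [Hc Hp]] := crit_col H u0.
have := chi_le4 (c_big H) (c := fun x => c (g x)) (fun x => Hc _)
  (fun x y exy => Hp _ _ (Hu x) (Hu y) (Hg _ _ exy)).
by rewrite (c_crit H).1.
Qed.

Lemma no_K5 (T : finType) (e : rel T) (H : Ctx e) (u0 a b c d f : T) :
  a != u0 -> b != u0 -> c != u0 -> d != u0 -> f != u0 ->
  e a b -> e a c -> e a d -> e a f -> e b c -> e b d -> e b f ->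
  e c d -> e c f -> e d f -> False.
Proof.
move=> ha hb hc hd hf eab eac ead eaf ebc ebd ebf ecd ecf edf.
have [col [Hc Hp]] := crit_col H u0.
have U : uniq [:: col a; col b; col c; col d; col f].
  rewrite /= !inE !negb_or.
  by rewrite (Hp _ _ ha hb eab) (Hp _ _ ha hc eac) (Hp _ _ ha hd ead) (Hp _ _ ha hf eaf)
    (Hp _ _ hb hc ebc) (Hp _ _ hb hd ebd) (Hp _ _ hb hf ebf) (Hp _ _ hc hd ecd)
    (Hp _ _ hc hf ecf) (Hp _ _ hd hf edf).
have S : {subset [:: col a; col b; col c; col d; col f] <= iota 0 4}.
  move=> z; rewrite mem_iota add0n /=.
  by rewrite !inE => /predU1P [->|/predU1P [->|/predU1P [->|/predU1P [->|/eqP->]]]].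
by have := uniq_leq_size U S.
Qed.

Lemma three_col (p q a b c : nat) : p < 4 -> q < 4 -> a < 4 -> b < 4 -> c < 4 -> p != q ->
  a != p -> a != q -> b != p -> b != q -> c != p -> c != q -> a != b -> b != c -> a = c.
Proof. lia. Qed.

Lemma no_W (T : finType) (e : rel T) (H : Ctx e) (u0 c1 c2 c3 c4 c5 d1 d2 : T) :
  c1 != u0 -> c2 != u0 -> c3 != u0 -> c4 != u0 -> c5 != u0 -> d1 != u0 -> d2 != u0 ->
  e c1 c2 -> e c2 c3 -> e c3 c4 -> e c4 c5 -> e c5 c1 -> e d1 d2 ->
  e d1 c1 -> e d1 c2 -> e d1 c3 -> e d1 c4 -> e d1 c5 ->
  e d2 c1 -> e d2 c2 -> e d2 c3 -> e d2 c4 -> e d2 c5 -> False.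
Proof.
move=> h1 h2 h3 h4 h5 hd1 hd2 e12 e23 e34 e45 e51 edd a1 a2 a3 a4 a5 b1 b2 b3 b4 b5.
have [col [Hc Hp]] := crit_col H u0.
have N : forall x y, x != u0 -> y != u0 -> e y x -> col x != col y.
  by move=> x y hx hy exy; apply: Hp => //; rewrite (c_sym H).
have E13 : col c1 = col c3 :=
  three_col (Hc d1) (Hc d2) (Hc c1) (Hc c2) (Hc c3) (Hp _ _ hd1 hd2 edd)
   (N _ _ h1 hd1 a1) (N _ _ h1 hd2 b1) (N _ _ h2 hd1 a2) (N _ _ h2 hd2 b2)
   (N _ _ h3 hd1 a3) (N _ _ h3 hd2 b3) (Hp _ _ h1 h2 e12) (Hp _ _ h2 h3 e23).
have E35 : col c3 = col c5 :=
  three_col (Hc d1) (Hc d2) (Hc c3) (Hc c4) (Hc c5) (Hp _ _ hd1 hd2 edd)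
   (N _ _ h3 hd1 a3) (N _ _ h3 hd2 b3) (N _ _ h4 hd1 a4) (N _ _ h4 hd2 b4)
   (N _ _ h5 hd1 a5) (N _ _ h5 hd2 b5) (Hp _ _ h3 h4 e34) (Hp _ _ h4 h5 e45).
have := Hp _ _ h5 h1 e51.
by rewrite -E35 -E13 eqxx.
Qed.

Lemma induce (T : finType) (e : rel T) (H : Ctx e) n (R : rel 'I_n) (f : 'I_n -> T) :
  (forall i j, R i j = R j i) -> (forall i, R i i = false) ->
  (forall i j : 'I_n, i < j -> e (f i) (f j) = R i j) ->
  forall i j, e (f i) (f j) = R i j.
Proof.
move=> Rs Ri Hl i j.
case: (ltngtP i j) => [lt|gt|eq]; first exact: Hl.
  by rewrite (c_sym H) Rs; apply: Hl.
have -> : i = j by apply: val_inj.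
by rewrite (c_irr H) Ri.
Qed.

Lemma inj_of (T : finType) (e : rel T) (H : Ctx e) n (R : rel 'I_n) (f : 'I_n -> T) :
  (forall i j, e (f i) (f j) = R i j) ->
  (forall i j : 'I_n, i != j -> [|| R i j, [exists k, R i k != R j k] | f i != f j]) ->
  injective f.
Proof.
move=> H1 H2 i j fij; apply/eqP; apply/negPn/negP=> nij.
case/or3P: (H2 i j nij) => [Rij|/existsP [k]|].
- by have := H1 i j; rewrite fij (c_irr H) Rij.
- by rewrite -!H1 fij eqxx.
- by rewrite fij eqxx.
Qed.

Ltac kill_irr H :=
  match goal with h : ?e ?x ?x = true |- _ => by rewrite (c_irr H) in h end.

Lemma no_P5 (T : finType) (e : rel T) (H : Ctx e) (a b c d f : T) :
  e a b -> e b c -> e c d -> e d f -> ~~ e a c -> ~~ e a d -> ~~ e a f ->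
  ~~ e b d -> ~~ e b f -> ~~ e c f -> False.
Proof.
move=> hab hbc hcd hdf /negbTE hac /negbTE had /negbTE haf /negbTE hbd /negbTE hbf /negbTE hcf.
apply: (c_P5 H).
pose g := fun i : 'I_5 => nth a [:: a; b; c; d; f] i.
have Hg : forall i j, e (g i) (g j) = P5_rel i j.
  apply: (induce H) => //.
  - by move=> i j; rewrite /P5_rel orbC.
  - by move=> i; rewrite /P5_rel; apply/negbTE; rewrite negb_or; apply/andP; split; apply/eqP; lia.
  move=> i j; case: i => [[|[|[|[|[|i]]]]] Hi] //; case: j => [[|[|[|[|[|j]]]]] Hj] //= _;
    by rewrite ?hab ?hbc ?hcd ?hdf ?hac ?had ?haf ?hbd ?hbf ?hcf.
exists g; split => //.
have hab' : e b a = true by rewrite (c_sym H).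
have hbc' : e c b = true by rewrite (c_sym H).
have hcd' : e d c = true by rewrite (c_sym H).
have hdf' : e f d = true by rewrite (c_sym H).
have hac' : e c a = false by rewrite (c_sym H).
have had' : e d a = false by rewrite (c_sym H).
have haf' : e f a = false by rewrite (c_sym H).
have hbd' : e d b = false by rewrite (c_sym H).
have hbf' : e f b = false by rewrite (c_sym H).
have hcf' : e f c = false by rewrite (c_sym H).
move: (hab : e a b = true) (hbc : e b c = true) (hcd : e c d = true) (hdf : e d f = true) => hab0 hbc0 hcd0 hdf0.
move=> i j; rewrite /g; case: i => [[|[|[|[|[|i]]]]] Hi] //; case: j => [[|[|[|[|[|j]]]]] Hj] //= fij;
  try (by apply: val_inj); subst; first [congruence | kill_irr H].
Qed.

Lemma no_chair (T : finType) (e : rel T) (H : Ctx e) (a b c d f : T) :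
  a != f -> e a b -> e b c -> e c d -> e b f -> ~~ e a c -> ~~ e a d -> ~~ e a f ->
  ~~ e b d -> ~~ e c f -> ~~ e d f -> False.
Proof.
move=> naf hab hbc hcd hbf /negbTE hac /negbTE had /negbTE haf /negbTE hbd /negbTE hcf /negbTE hdf.
apply: (c_chair H).
pose g := fun i : 'I_5 => nth a [:: a; b; c; d; f] i.
have Hg : forall i j, e (g i) (g j) = chair_rel i j.
  apply: (induce H).
  - by move=> i j; case: i => [[|[|[|[|[|i]]]]] Hi] //; case: j => [[|[|[|[|[|j]]]]] Hj].
  - by move=> i; case: i => [[|[|[|[|[|i]]]]] Hi].
  move=> i j; case: i => [[|[|[|[|[|i]]]]] Hi] //; case: j => [[|[|[|[|[|j]]]]] Hj] //= _;
    by rewrite ?hab ?hbc ?hcd ?hdf ?hac ?had ?haf ?hbd ?hbf ?hcf.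
exists g; split => //.
have hab' : e b a = true by rewrite (c_sym H).
have hbc' : e c b = true by rewrite (c_sym H).
have hcd' : e d c = true by rewrite (c_sym H).
have hbf' : e f b = true by rewrite (c_sym H).
have hac' : e c a = false by rewrite (c_sym H).
have had' : e d a = false by rewrite (c_sym H).
have haf' : e f a = false by rewrite (c_sym H).
have hbd' : e d b = false by rewrite (c_sym H).
have hdf' : e f d = false by rewrite (c_sym H).
have hcf' : e f c = false by rewrite (c_sym H).
move: (hab : e a b = true) (hbc : e b c = true) (hcd : e c d = true) (hbf : e b f = true) => hab0 hbc0 hcd0 hbf0.
move=> i j; rewrite /g; case: i => [[|[|[|[|[|i]]]]] Hi] //; case: j => [[|[|[|[|[|j]]]]] Hj] //= fij;
  try (by apply: val_inj); try (by rewrite fij eqxx in naf); subst; first [congruence | kill_irr H].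
Qed.


Record Cyc (T : finType) (e : rel T) (v0 v1 v2 v3 v4 : T) : Prop := MkCyc {
  e01 : e v0 v1; e12 : e v1 v2; e23 : e v2 v3; e34 : e v3 v4; e40 : e v4 v0;
  n02 : ~~ e v0 v2; n03 : ~~ e v0 v3; n13 : ~~ e v1 v3; n14 : ~~ e v1 v4; n24 : ~~ e v2 v4 }.

Definition inA (T : finType) (e : rel T) (v0 v1 v2 v3 v4 : T) (x : T) : bool :=
  [&& ~~ e x v0, e x v1, e x v2, e x v3 & e x v4].

Ltac sy H := solve [ done | rewrite (c_sym H); done ].

Lemma neq_adj (T : finType) (e : rel T) (a b c : T) : e a c -> ~~ e b c -> a != b.
Proof. by move=> h1 h2; apply/eqP => ab; rewrite -ab h1 in h2. Qed.

Lemma fold1 (T : finType) (e : rel T) (H : Ctx e) (x y : T) :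
  x != y -> ~~ e x y -> exists w, e w x && ~~ e w y.
Proof.
move=> nxy exy.
case: (boolP [exists w, e w x && ~~ e w y]) => [/existsP //|Hn].
exfalso.
have N : forall w, e w x -> e w y.
  move=> w ewx; apply/negPn/negP => nwy; move/negP: Hn; apply; apply/existsP; exists w.
  by rewrite ewx nwy.
apply: (no_hom H (g := fun u => if u == x then y else u) (u0 := x)).
- move=> u w euw.
  case: (eqVneq u x) => [ux|ux]; case: (eqVneq w x) => [wx|wx].
  + by rewrite ux wx (c_irr H) in euw.
  + rewrite (c_sym H); apply: N; by rewrite -ux (c_sym H).
  + by apply: N; rewrite -wx.
  + done.
- move=> u; case: (eqVneq u x) => // _; by rewrite eq_sym.
Qed.


Lemma WL (T : finType) (e : rel T) (H : Ctx e) v0 v1 v2 v3 v4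
  (C : Cyc e v0 v1 v2 v3 v4) (x y w : T) :
  inA e v0 v1 v2 v3 v4 x -> inA e v0 v1 v2 v3 v4 y -> ~~ e x y ->
  e w x -> ~~ e w y ->
  inA e v0 v1 v2 v3 v4 w \/ [/\ e w v0, e w v2 & e w v3].
Proof.
case: C => e01 e12 e23 e34 e40 n02 n03 n13 n14 n24.
move=> Ax Ay nxy ewx nwy.
case/and5P: Ax => x0 x1 x2 x3 x4; case/and5P: Ay => y0 y1 y2 y3 y4.
case: (boolP (e w v0)) => E0.
- right; split => //.
  + have [//|n2] := boolP (e w v2); exfalso.
    by apply: (no_P5 H (a:=v0) (b:=w) (c:=x) (d:=v2) (f:=y)); sy H.
  + have [//|n3] := boolP (e w v3); exfalso.
    by apply: (no_P5 H (a:=v0) (b:=w) (c:=x) (d:=v3) (f:=y)); sy H.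
- left.
  have yv0 : y != v0 by apply: (neq_adj y2 n02).
  have wv0 : v0 != w.
    by apply/eqP => h; move: ewx; rewrite -h (c_sym H); apply/negP.
  have [h1|n1] := boolP (e w v1); last first.
    by exfalso; apply: (no_chair H (a:=y) (b:=v1) (c:=x) (d:=w) (f:=v0)); sy H.
  have [h4|n4] := boolP (e w v4); last first.
    by exfalso; apply: (no_chair H (a:=y) (b:=v4) (c:=x) (d:=w) (f:=v0)); sy H.
  have [h2|n2] := boolP (e w v2); last first.
    by exfalso; apply: (no_chair H (a:=v0) (b:=v4) (c:=y) (d:=v2) (f:=w)); sy H.
  have [h3|n3] := boolP (e w v3); last first.
    by exfalso; apply: (no_chair H (a:=v0) (b:=v1) (c:=y) (d:=v3) (f:=w)); sy H.
  by apply/and5P; split.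
Qed.

Lemma Dom (T : finType) (e : rel T) (H : Ctx e) v0 v1 v2 v3 v4
  (C : Cyc e v0 v1 v2 v3 v4) (x y a : T) :
  inA e v0 v1 v2 v3 v4 x -> inA e v0 v1 v2 v3 v4 y -> x != y -> ~~ e x y ->
  e a v0 -> e a v2 -> ~~ e a x -> ~~ e a y -> False.
Proof.
case: C => e01 e12 e23 e34 e40 n02 n03 n13 n14 n24.
move=> Ax Ay nxy exy a0 a2 nax nay.
case/and5P: Ax => x0 x1 x2 x3 x4; case/and5P: Ay => y0 y1 y2 y3 y4.
by apply: (no_chair H (a:=x) (b:=v2) (c:=a) (d:=v0) (f:=y)); sy H.
Qed.

Lemma inA_ne0 (T : finType) (e : rel T) v0 v1 v2 v3 v4 (C : Cyc e v0 v1 v2 v3 v4) x :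
  inA e v0 v1 v2 v3 v4 x -> x != v0.
Proof. by case/and5P => _ _ h _ _; apply: (neq_adj h (n02 C)). Qed.

Lemma step2 (T : finType) (e : rel T) (H : Ctx e) v0 v1 v2 v3 v4
  (C : Cyc e v0 v1 v2 v3 v4) (x y z : T) :
  inA e v0 v1 v2 v3 v4 x -> inA e v0 v1 v2 v3 v4 y -> inA e v0 v1 v2 v3 v4 z ->
  e x y -> e x z -> y != z -> False.
Proof.
move=> Ax Ay Az exy exz nyz.
have x' := inA_ne0 C Ax; have y' := inA_ne0 C Ay; have z' := inA_ne0 C Az.
have v1' : v1 != v0 by apply: (neq_adj (e12 C) (n02 C)).
have v2' : v2 != v0 by apply: (neq_adj (e23 C) (n03 C)).
have v3' : v3 != v0.
  by apply/eqP => h; have := e23 C; rewrite h (c_sym H) (negbTE (n02 C)).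
have CC := C.
case: C => e01 e12 e23 e34 e40 n02 n03 n13 n14 n24.
move: (Ax) (Ay) (Az) => /and5P [x0 x1 x2 x3 x4] /and5P [y0 y1 y2 y3 y4] /and5P [z0 z1 z2 z3 z4].
case: (boolP (e y z)) => eyz.
  by apply: (no_K5 H (u0:=v0) (a:=x) (b:=y) (c:=z) (d:=v1) (f:=v2)); sy H.
have [w1 /andP [w1y w1z]] := fold1 H nyz eyz.
have W1 := WL H CC Ay Az eyz w1y w1z.
have [w12 w13] : e w1 v2 /\ e w1 v3.
  by case: W1 => [/and5P [] | []].
have w1' : w1 != v0 by apply: (neq_adj w12 n02).
have nw1x : ~~ e w1 x.
  apply/negP => h.
  by apply: (no_K5 H (u0:=v0) (a:=w1) (b:=x) (c:=y) (d:=v2) (f:=v3)); sy H.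
have A1 : inA e v0 v1 v2 v3 v4 w1.
  case: W1 => // [[w10 _ _]]; exfalso.
  by apply: (no_P5 H (a:=v0) (b:=w1) (c:=y) (d:=x) (f:=z)); sy H.
have nzy : z != y by rewrite eq_sym.
have ezy : ~~ e z y by rewrite (c_sym H).
have [w2 /andP [w2z w2y]] := fold1 H nzy ezy.
have W2 := WL H CC Az Ay ezy w2z w2y.
have [w22 w23] : e w2 v2 /\ e w2 v3.
  by case: W2 => [/and5P [] | []].
have w2' : w2 != v0 by apply: (neq_adj w22 n02).
have nw2x : ~~ e w2 x.
  apply/negP => h.
  by apply: (no_K5 H (u0:=v0) (a:=w2) (b:=x) (c:=z) (d:=v2) (f:=v3)); sy H.
have A2 : inA e v0 v1 v2 v3 v4 w2.
  case: W2 => // [[w20 _ _]]; exfalso.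
  by apply: (no_P5 H (a:=v0) (b:=w2) (c:=z) (d:=x) (f:=y)); sy H.
move: (A1) (A2) => /and5P [a0 a1 a2 a3 a4] /and5P [b0 b1 b2 b3 b4].
case: (boolP (e w1 w2)) => e12'.
  by apply: (no_W H (u0:=v0) (c1:=w1) (c2:=y) (c3:=x) (c4:=z) (c5:=w2) (d1:=v1) (d2:=v2)); sy H.
by apply: (no_P5 H (a:=w1) (b:=y) (c:=x) (d:=z) (f:=w2)); sy H.
Qed.

Lemma step1 (T : finType) (e : rel T) (H : Ctx e) v0 v1 v2 v3 v4
  (C : Cyc e v0 v1 v2 v3 v4) (x y z : T) :
  inA e v0 v1 v2 v3 v4 x -> inA e v0 v1 v2 v3 v4 y -> inA e v0 v1 v2 v3 v4 z ->
  x != y -> y != z -> z != x ->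
  (forall w, inA e v0 v1 v2 v3 v4 w -> ~~ e x w) ->
  (forall w, inA e v0 v1 v2 v3 v4 w -> ~~ e y w) ->
  (forall w, inA e v0 v1 v2 v3 v4 w -> ~~ e z w) -> False.
Proof.
move=> Ax Ay Az nxy nyz nzx Ix Iy Iz.
have z' := inA_ne0 C Az.
have v2' : v2 != v0 by apply: (neq_adj (e23 C) (n03 C)).
have v3' : v3 != v0.
  by apply/eqP => h; have := e23 C; rewrite h (c_sym H) (negbTE (n02 C)).
have CC := C.
case: C => e01 e12 e23 e34 e40 n02 n03 n13 n14 n24.
move: (Ax) (Ay) (Az) => /and5P [x0 x1 x2 x3 x4] /and5P [y0 y1 y2 y3 y4] /and5P [z0 z1 z2 z3 z4].
have exy := Ix y Ay; have eyz := Iy z Az; have ezx := Iz x Ax.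
have eyx : ~~ e y x by rewrite (c_sym H).
have ezy : ~~ e z y by rewrite (c_sym H).
have exz : ~~ e x z by rewrite (c_sym H).
have nyx : y != x by rewrite eq_sym.
have nxz : x != z by rewrite eq_sym.
have [a1 /andP [a1x a1y]] := fold1 H nxy exy.
have [a10 a12 a13] : [/\ e a1 v0, e a1 v2 & e a1 v3].
  case: (WL H CC Ax Ay exy a1x a1y) => // A1.
  by have := Ix a1 A1; rewrite (c_sym H) a1x.
have a1z : e a1 z.
  by apply/negPn/negP => h; apply: (Dom H CC Ay Az nyz eyz a10 a12 a1y h).
have [a2 /andP [a2y a2x]] := fold1 H nyx eyx.
have [a20 a22 a23] : [/\ e a2 v0, e a2 v2 & e a2 v3].
  case: (WL H CC Ay Ax eyx a2y a2x) => // A2.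
  by have := Iy a2 A2; rewrite (c_sym H) a2y.
have a2z : e a2 z.
  by apply/negPn/negP => h; apply: (Dom H CC Ax Az nxz exz a20 a22 a2x h).
have a1' : a1 != v0 by apply: (neq_adj a12 n02).
have a2' : a2 != v0 by apply: (neq_adj a22 n02).
case: (boolP (e a1 a2)) => e12'.
  by apply: (no_K5 H (u0:=v0) (a:=a1) (b:=a2) (c:=z) (d:=v2) (f:=v3)); sy H.
by apply: (no_P5 H (a:=x) (b:=a1) (c:=v0) (d:=a2) (f:=y)); sy H.
Qed.

Lemma step3 (T : finType) (e : rel T) (H : Ctx e) v0 v1 v2 v3 v4
  (C : Cyc e v0 v1 v2 v3 v4) (x p y q : T) :
  inA e v0 v1 v2 v3 v4 x -> inA e v0 v1 v2 v3 v4 p ->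
  inA e v0 v1 v2 v3 v4 y -> inA e v0 v1 v2 v3 v4 q ->
  e x p -> e y q -> ~~ e x y -> ~~ e x q -> ~~ e p y -> ~~ e p q -> False.
Proof.
move=> Ax Ap Ay Aq exp eyq nxy nxq npy npq.
have CC := C.
have deg : forall a b c, inA e v0 v1 v2 v3 v4 a -> inA e v0 v1 v2 v3 v4 b ->
    inA e v0 v1 v2 v3 v4 c -> e a b -> e a c -> b = c.
  move=> a b c Aa Ab Ac eab eac; apply/eqP; apply/negPn/negP => nbc.
  exact: (step2 H CC Aa Ab Ac eab eac nbc).
have x' := inA_ne0 C Ax; have p' := inA_ne0 C Ap.
have y' := inA_ne0 C Ay; have q' := inA_ne0 C Aq.
have v2' : v2 != v0 by apply: (neq_adj (e23 C) (n03 C)).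
have v3' : v3 != v0.
  by apply/eqP => h; have := e23 C; rewrite h (c_sym H) (negbTE (n02 C)).
case: C => e01 e12 e23 e34 e40 n02 n03 n13 n14 n24.
move: (Ax) (Ap) (Ay) (Aq) => /and5P [x0 x1 x2 x3 x4] /and5P [p0 p1 p2 p3 p4]
  /and5P [y0 y1 y2 y3 y4] /and5P [q0 q1 q2 q3 q4].
have nyx : y != x by apply: (neq_adj eyq nxq).
have nxy' : x != y by rewrite eq_sym.
have npy' : p != y by apply/eqP => h; rewrite h eyq in npq.
have nxq' : x != q by apply/eqP => h; move: nxy; rewrite h (c_sym H) eyq.
have npq' : p != q by apply/eqP => h; move: nxq; rewrite -h exp.
have noF : forall a, e a v0 -> e a v2 -> e a v3 -> False.
  move=> a a0 a2 a3.
  have a' : a != v0 by apply: (neq_adj a2 n02).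
  have ay : e a y.
    apply/negPn/negP => nay.
    have ax : e a x by apply/negPn/negP => h; apply: (Dom H CC Ax Ay nxy' nxy a0 a2 h nay).
    have ap : e a p by apply/negPn/negP => h; apply: (Dom H CC Ap Ay npy' npy a0 a2 h nay).
    by apply: (no_K5 H (u0:=v0) (a:=a) (b:=x) (c:=p) (d:=v2) (f:=v3)); sy H.
  have aq : e a q.
    apply/negPn/negP => naq.
    have ax : e a x by apply/negPn/negP => h; apply: (Dom H CC Ax Aq nxq' nxq a0 a2 h naq).
    have ap : e a p by apply/negPn/negP => h; apply: (Dom H CC Ap Aq npq' npq a0 a2 h naq).
    by apply: (no_K5 H (u0:=v0) (a:=a) (b:=x) (c:=p) (d:=v2) (f:=v3)); sy H.
  by apply: (no_K5 H (u0:=v0) (a:=a) (b:=y) (c:=q) (d:=v2) (f:=v3)); sy H.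
have N1 : forall w, e w x -> w != p -> e w y.
  move=> w wx wp; apply/negPn/negP => wy.
  case: (WL H CC Ax Ay nxy wx wy) => [Aw|[]]; last exact: noF.
  have := deg _ _ _ Ax Ap Aw exp; rewrite (c_sym H) wx => /(_ isT) h.
  by rewrite h eqxx in wp.
have N2 : forall w, e w p -> w != x -> e w q.
  move=> w wp wx; apply/negPn/negP => wq.
  case: (WL H CC Ap Aq npq wp wq) => [Aw|[]]; last exact: noF.
  have epx : e p x by rewrite (c_sym H).
  have := deg _ _ _ Ap Ax Aw epx; rewrite (c_sym H) wp => /(_ isT) h.
  by rewrite h eqxx in wx.
have nxp : x != p by apply: contraTneq exp => ->; rewrite (c_irr H).
apply: (no_hom H (g := fun u => if u == x then y else if u == p then q else u) (u0 := x)).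
- move=> u w euw.
  case: (eqVneq u x) => [ux|ux]; case: (eqVneq w x) => [wx|wx].
  + by rewrite ux wx (c_irr H) in euw.
  + case: (eqVneq w p) => [wp|wp]; first done.
    rewrite (c_sym H); apply: N1 => //; by rewrite -ux (c_sym H).
  + case: (eqVneq u p) => [up|up]; first by rewrite (c_sym H).
    by apply: N1 => //; rewrite -wx.
  + case: (eqVneq u p) => [up|up]; case: (eqVneq w p) => [wp|wp].
    * by rewrite up wp (c_irr H) in euw.
    * rewrite (c_sym H); apply: N2 => //; by rewrite -up (c_sym H).
    * by apply: N2 => //; rewrite -wp.
    * done.
- move=> u; case: (eqVneq u x) => [_|ux]; first by rewrite eq_sym.
  case: (eqVneq u p) => [_|//]; by rewrite eq_sym.
Qed.

Lemma A_card (T : finType) (e : rel T) (H : Ctx e) v0 v1 v2 v3 v4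
  (C : Cyc e v0 v1 v2 v3 v4) :
  #|[set x | inA e v0 v1 v2 v3 v4 x]| <= 4.
Proof.
set A := [set x | inA e v0 v1 v2 v3 v4 x].
set B := [set x in A | [exists w, inA e v0 v1 v2 v3 v4 w && e x w]].
have deg : forall a b c, inA e v0 v1 v2 v3 v4 a -> inA e v0 v1 v2 v3 v4 b ->
    inA e v0 v1 v2 v3 v4 c -> e a b -> e a c -> b = c.
  move=> a b c Aa Ab Ac eab eac; apply/eqP; apply/negPn/negP => nbc.
  exact: (step2 H C Aa Ab Ac eab eac nbc).
rewrite -(cardsID B A).
have h1 : #|A :\: B| <= 2.
  rewrite leqNgt; apply/negP => /card_gt2P [x [y [z [[hx hy hz] [nxy nyz nzx]]]]].
  have iso : forall u, u \in A :\: B -> inA e v0 v1 v2 v3 v4 u /\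
      forall w, inA e v0 v1 v2 v3 v4 w -> ~~ e u w.
    move=> u; rewrite !inE => /andP [nB uA]; split => // w Aw.
    apply/negP => euw; move: nB; rewrite uA /=; apply/negP; rewrite negbK.
    by apply/existsP; exists w; rewrite Aw euw.
  have [Ax Ix] := iso x hx; have [Ay Iy] := iso y hy; have [Az Iz] := iso z hz.
  exact: (step1 H C Ax Ay Az nxy nyz nzx Ix Iy Iz).
have h2 : #|A :&: B| <= 2.
  rewrite leqNgt; apply/negP => /card_gt2P [x [y [z [[hx hy hz] [nxy nyz nzx]]]]].
  have nb : forall u, u \in A :&: B -> inA e v0 v1 v2 v3 v4 u /\
      exists w, inA e v0 v1 v2 v3 v4 w && e u w.
    by move=> u; rewrite !inE => /andP [uA /andP [_ /existsP ex]]; split.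
  have [Ax [p /andP [Ap exp]]] := nb x hx.
  have [w [hw nwx nwp]] : exists w, [/\ w \in A :&: B, w != x & w != p].
    case: (eqVneq y p) => [yp|yp].
      by exists z; split => //; rewrite -yp eq_sym.
    by exists y; split => //; rewrite eq_sym.
  have [Aw [q /andP [Aq ewq]]] := nb w hw.
  have nxw : ~~ e x w.
    by apply/negP => h; have := deg _ _ _ Ax Ap Aw exp h => ph; rewrite ph eqxx in nwp.
  have nxq : ~~ e x q.
    apply/negP => h; have := deg _ _ _ Ax Ap Aq exp h => ph.
    have epx : e p x by rewrite (c_sym H).
    have epw : e p w by rewrite ph (c_sym H).
    by have := deg _ _ _ Ap Ax Aw epx epw => xw; rewrite xw eqxx in nwx.
  have npw : ~~ e p w.
    apply/negP => h; have epx : e p x by rewrite (c_sym H).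
    by have := deg _ _ _ Ap Ax Aw epx h => xw; rewrite xw eqxx in nwx.
  have npq : ~~ e p q.
    apply/negP => h; have epx : e p x by rewrite (c_sym H).
    have := deg _ _ _ Ap Ax Aq epx h => xq.
    have exw : e x w by rewrite xq (c_sym H).
    by rewrite exw in nxw.
  exact: (step3 H C Ax Ap Aw Aq exp ewq nxw nxq npw npq).
by apply: (leq_trans (leq_add h2 h1)).
Qed.


Lemma core (T : finType) (e : rel T) (H : Ctx e) (v : 'I_5 -> T)
  (Hv : forall a b, e (v a) (v b) = C5_rel a b) (i j1 j2 j3 j4 : 'I_5) :
  C5_rel i j1 -> C5_rel j1 j2 -> C5_rel j2 j3 -> C5_rel j3 j4 -> C5_rel j4 i ->
  ~~ C5_rel i j2 -> ~~ C5_rel i j3 -> ~~ C5_rel j1 j3 -> ~~ C5_rel j1 j4 -> ~~ C5_rel j2 j4 ->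
  j1 != i -> j2 != i -> j3 != i -> j4 != i -> #|S4 e v i| <= 6.
Proof.
move=> c1 c2 c3 c4 c5 c6 c7 c8 c9 c10 d1 d2 d3 d4.
have C : Cyc e (v i) (v j1) (v j2) (v j3) (v j4) by constructor; rewrite Hv.
apply: (leq_trans _ (leq_trans (A_card H C) (isT : 4 <= 6))).
apply: subset_leq_card; apply/subsetP => x; rewrite !inE => /andP [_ /forallP h].
have F := fun j => eqP (h j).
rewrite /inA (F i) eqxx (F j1) (F j2) (F j3) (F j4).
by rewrite d1 d2 d3 d4.
Qed.

Theorem mainTheorem17 (T : finType) (e : rel T)
  (e_sym : symmetric e) (e_irr : irreflexive e)
  (Hcrit : vertex_critical 5 e)
  (HP5 : H_free P5_rel e) (Hchair : H_free chair_rel e)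
  (HnotF : ~ in_F e)
  (v : 'I_5 -> T) (HC : induced_C5 e v) :
  forall i : 'I_5, #|S4 e v i| <= 6.
Proof.
have big : 5 <= #|T| by have := @leq_card _ _ v HC.1; rewrite card_ord.
have H : Ctx e := MkCtx e_sym e_irr Hcrit HP5 Hchair big.
have Hv := HC.2.
case=> [[|[|[|[|[|i]]]]] Hi] //.
- by apply: (core H Hv (j1 := @Ordinal 5 1 isT) (j2 := @Ordinal 5 2 isT) (j3 := @Ordinal 5 3 isT) (j4 := @Ordinal 5 4 isT)).
- by apply: (core H Hv (j1 := @Ordinal 5 2 isT) (j2 := @Ordinal 5 3 isT) (j3 := @Ordinal 5 4 isT) (j4 := @Ordinal 5 0 isT)).
- by apply: (core H Hv (j1 := @Ordinal 5 3 isT) (j2 := @Ordinal 5 4 isT) (j3 := @Ordinal 5 0 isT) (j4 := @Ordinal 5 1 isT)).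
- by apply: (core H Hv (j1 := @Ordinal 5 4 isT) (j2 := @Ordinal 5 0 isT) (j3 := @Ordinal 5 1 isT) (j4 := @Ordinal 5 2 isT)).
- by apply: (core H Hv (j1 := @Ordinal 5 0 isT) (j2 := @Ordinal 5 1 isT) (j3 := @Ordinal 5 2 isT) (j4 := @Ordinal 5 3 isT)).
Qed.
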